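(* In the setting below, for any set $\mathcal{F}$ of fixed possible edges and any input graph $G\in\mathcal{G}$, the random vertex sequence $W=W_0W_1\cdots W_n$ generated by one iteration of the Unweighted Graph Sampler (run until the first $n\ge 1$ with $W_n=W_0$) has finite expected length.
   Context: Setting (unweighted graphs). $V$ is a finite vertex set; graphs are either all directed or all undirected and have no multiple edges; $uv$ denotes the (possible) edge from $u$ to $v$ (for undirected graphs $uv=vu$). $G_0$ is a given graph on $V$ and $\mathcal{F}$ is a given subset of the possible edges on $V$. $\mathcal{G}$ is the set of all graphs $G$ on $V$ having the same degree sequence as $G_0$ (for directed graphs: the same in-degree and the same out-degree at every vertex) and satisfying $E(G)\cap\mathcal{F}=E(G_0)\cap\mathcal{F}$. The set of known edges is $\tilde{\mathcal{F}}=\{uv : uv\in E(G)\text{ for all }G\in\mathcal{G}, \text{ or } uv\notin E(G)\text{ for all }G\in\mathcal{G}\}$ (so $\mathcal{F}\subseteq\tilde{\mathcal{F}}$). For a graph $G$ and vertex $u$ define $N_G(u)=\{v\in V: vu\in E(G),\ vu\notin\tilde{\mathcal{F}}\}$ and $M_G(u)=\{v\in V: uv\notin E(G),\ uv\notin\tilde{\mathcal{F}}\}$. Unweighted Graph Sampler (one iteration, input $G\in\mathcal{G}$): set $W_{-1}=*$ (a dummy symbol), sample $W_0$ uniformly from $\{v\in V: N_G(v)\neq\emptyset\}$, set $n=0$; then repeat: sample $W_{n+1}$ uniformly from $N_G(W_n)\setminus\{W_{n-1}\}$; sample $W_{n+2}$ uniformly from $M_G(W_{n+1})$ (computed in the current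 graph $G$); delete the edge $W_{n+1}W_n$ from $E(G)$ and add the edge $W_{n+1}W_{n+2}$ to $E(G)$; set $n\leftarrow n+2$; until $W_n=W_0$. Output the current $G$. (Here $G$ always denotes the current, progressively modified, graph.) *)

(* Defs.v *)
From HB Require Import structures.
From mathcomp Require Import all_boot all_order all_algebra.
Set Implicit Arguments. Unset Strict Implicit. Unset Printing Implicit Defensive.
Import Order.TTheory GRing.Theory Num.Theory.
Local Open Scope ring_scope.

(* A graph on V is a set of ordered pairs (u,v) = the edge "uv".
   d = true : directed graphs; d = false : undirected graphs, represented
   as symmetric sets (uv = vu). Graphs are loopless. *)

Section Sampler.
Variable d : bool.
Variable V : finType.
Local Notation graph := {set V * V}.

Definition wf_graph (G : graph) : bool :=
  [forall u, (u, u) \notin G] &&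
  (d || [forall u, forall v, ((u, v) \in G) ==> ((v, u) \in G)]).

Definition edge_in (F : graph) (u v : V) : bool :=
  if d then (u, v) \in F else ((u, v) \in F) || ((v, u) \in F).

Definition outdeg (G : graph) (u : V) : nat := #|[set v | (u, v) \in G]|.
Definition indeg (G : graph) (u : V) : nat := #|[set v | (v, u) \in G]|.

Variables (G0 F : graph).

Definition in_calG (G : graph) : bool :=
  [&& wf_graph G,
      [forall u, (outdeg G u == outdeg G0 u) && (indeg G u == indeg G0 u)] &
      [forall u, forall v, ((u != v) && edge_in F u v) ==>
                            (((u, v) \in G) == ((u, v) \in G0))]].

Definition known (u v : V) : bool :=
  [forall H : graph, in_calG H ==> ((u, v) \in H)] ||
  [forall H : graph, in_calG H ==> ((u, v) \notin H)].

Definition NG (G : graph) (u : V) : {set V} :=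
  [set v | ((v, u) \in G) && ~~ known v u].
Definition MG (G : graph) (u : V) : {set V} :=
  [set v | ((u, v) \notin G) && ~~ known u v].

Definition del_edge (G : graph) (u v : V) : graph :=
  if d then G :\ (u, v) else G :\ (u, v) :\ (v, u).
Definition add_edge (G : graph) (u v : V) : graph :=
  if d then (u, v) |: G else (u, v) |: ((v, u) |: G).

(* state of the running sampler: (current graph, W_{n-1} (None = the dummy symbol), W_n, W_0) *)
Definition state : finType := (graph * option V * V * V)%type.

(* Sub-stochastic transition kernel of one round (W_n -> W_{n+2}) restricted
   to the outcomes where the sampler has NOT stopped (W_{n+2} <> W_0).
   If a sampling set is empty the sampler is stuck: it never terminates
   (modelled as staying in the current state forever). *)
Definition Krun (s s' : state) : rat :=
  let: (G, p, c, w0) := s in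
  let A := [set w in NG G c | Some w != p] in
  if A == set0 then (s' == s)%:R else
  \sum_(w in A) #|A|%:R^-1 *
     (let B := MG G w in
      if B == set0 then (s' == s)%:R else
      \sum_(x in B | x != w0) #|B|%:R^-1 *
          (s' == (add_edge (del_edge G w c) w x, Some w, x, w0))%:R).

Definition init (G : graph) (s : state) : rat :=
  let: (H, p, c, w0) := s in
  let I := [set v | NG G v != set0] in
  if [&& H == G, p == None, c == w0 & c \in I] then #|I|%:R^-1 else 0.

Fixpoint dist (G : graph) (k : nat) : state -> rat :=
  match k with
  | 0 => init G
  | k'.+1 => fun s' => \sum_(s : state) dist G k' s * Krun s s'
  end.

(* P(T > k), T = number of rounds (the length of W is n = 2T) *)
Definition tail_prob (G : graph) (k : nat) : rat := \sum_(s : state) dist G k s.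

End Sampler.

(* Main.v *)
Require Import Defs.
From HB Require Import structures.
From mathcomp Require Import all_boot all_order all_algebra.
From Stdlib Require Import Classical.
From mathcomp Require Import ring lra zify.
Set Implicit Arguments. Unset Strict Implicit. Unset Printing Implicit Defensive.
Import Order.TTheory GRing.Theory Num.Theory.
Local Open Scope ring_scope.

Section Deg.
Variable V : finType.
Implicit Types (G : {set V * V}) (a b u : V).

Lemma indegD1 G a b u : (a, b) \in G -> indeg G u = (indeg (G :\ (a, b)) u + (b == u))%N.
Proof.
move=> Gab; rewrite /indeg.
case: (eqVneq b u) => [<-|ne].
  rewrite (cardsD1 a [set v | (v, b) \in G]) inE Gab addnC; congr (_ + _)%N.
  by apply: eq_card => v; rewrite !inE xpair_eqE eqxx andbT.
rewrite addn0; apply: eq_card => v; rewrite !inE xpair_eqE.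
by rewrite [u == b]eq_sym (negbTE ne) andbF.
Qed.

Lemma outdegD1 G a b u : (a, b) \in G -> outdeg G u = (outdeg (G :\ (a, b)) u + (a == u))%N.
Proof.
move=> Gab; rewrite /outdeg.
case: (eqVneq a u) => [<-|ne].
  rewrite (cardsD1 b [set v | (a, v) \in G]) inE Gab addnC; congr (_ + _)%N.
  by apply: eq_card => v; rewrite !inE xpair_eqE eqxx.
rewrite addn0; apply: eq_card => v; rewrite !inE xpair_eqE.
by rewrite [u == a]eq_sym (negbTE ne).
Qed.

Lemma indegU1 G a b u : (a, b) \notin G -> indeg ((a, b) |: G) u = (indeg G u + (b == u))%N.
Proof.
move=> nG; rewrite (@indegD1 _ a b) ?setU11 //; congr (indeg _ _ + _)%N.
by rewrite setU1K.
Qed.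

Lemma outdegU1 G a b u : (a, b) \notin G -> outdeg ((a, b) |: G) u = (outdeg G u + (a == u))%N.
Proof.
move=> nG; rewrite (@outdegD1 _ a b) ?setU11 //; congr (outdeg _ _ + _)%N.
by rewrite setU1K.
Qed.
End Deg.

Section Prob.
Variables (T : finType) (K : T -> T -> rat) (mu : T -> rat).
Hypothesis K_ge0 : forall s t, 0 <= K s t.
Hypothesis K_row : forall s, \sum_t K s t <= 1.
Hypothesis mu_ge0 : forall s, 0 <= mu s.

Fixpoint dst k : T -> rat :=
  match k with 0 => mu | k'.+1 => fun t' => \sum_s dst k' s * K s t' end.

Fixpoint Sj j : T -> rat :=
  match j with 0 => fun _ => 1 | j'.+1 => fun s => \sum_t K s t * Sj j' t end.

Definition tl k := \sum_t dst k t.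

Lemma dst_ge0 k t : 0 <= dst k t.
Proof.
elim: k t => [|k IH] t //=. by apply: sumr_ge0 => s _; rewrite mulr_ge0.
Qed.

Lemma Sj_bnd j t : 0 <= Sj j t <= 1.
Proof.
elim: j t => [|j IH] t /=; first done.
apply/andP; split; first by apply: sumr_ge0 => s _; rewrite mulr_ge0 // (andP (IH s)).1.
apply: le_trans (K_row t); apply: ler_sum => s _.
by rewrite ler_piMr // (andP (IH s)).2.
Qed.

Lemma Sj_mono j t : Sj j.+1 t <= Sj j t.
Proof.
elim: j t => [|j IH] t.
  by rewrite /=; apply: le_trans (K_row t); apply: ler_sum => s _; rewrite mulr1.
apply: ler_sum => s _; apply: ler_wpM2l; [exact: K_ge0 | exact: IH].
Qed.

Lemma Sj_anti i j t : (i <= j)%N -> Sj j t <= Sj i t.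
Proof.
move/subnK <-; elim: (j - i)%N => [|k IH] //.
by rewrite addSn; apply: le_trans (Sj_mono _ _) IH.
Qed.

Lemma tl_split a b : tl (a + b) = \sum_t dst a t * Sj b t.
Proof.
elim: b a => [|b IH] a.
  by rewrite addn0 /tl; apply: eq_bigr => t _; rewrite mulr1.
rewrite addnS -addSn IH /=; symmetry.
under eq_bigr do rewrite mulr_sumr.
rewrite exchange_big /=; apply: eq_bigr => u _.
by rewrite mulr_suml; apply: eq_bigr => t _; rewrite mulrA.
Qed.

Lemma tl_mono a : tl a.+1 <= tl a.
Proof.
rewrite -addn1 tl_split; apply: ler_sum => t _.
by rewrite ler_piMr ?dst_ge0 // (le_trans (Sj_mono 0 t)).
Qed.

Lemma tl_anti a b : (a <= b)%N -> tl b <= tl a.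
Proof.
move/subnK <-; elim: (b - a)%N => [|k IH] //.
by rewrite addSn; apply: le_trans (tl_mono _) IH.
Qed.

Lemma Sj_step s t j : 0 < K s t -> Sj j t < 1 -> Sj j.+1 s < 1.
Proof.
move=> Kp Sl /=; apply: lt_le_trans (K_row s).
rewrite -subr_gt0 -sumrB (bigD1 t) //=.
apply: ltr_pwDl.
  by rewrite -{1}(mulr1 (K s t)) -mulrBr mulr_gt0 // subr_gt0.
apply: sumr_ge0 => u _; rewrite -{1}(mulr1 (K s u)) -mulrBr mulr_ge0 //.
by rewrite subr_ge0 (andP (Sj_bnd j u)).2.
Qed.

Lemma Sj_base s : \sum_t K s t < 1 -> Sj 1 s < 1.
Proof. by move=> H; rewrite /=; under eq_bigr do rewrite mulr1. Qed.

Variable P : T -> Prop.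
Hypothesis reachP : forall k t, dst k t != 0 -> P t.
Hypothesis termP : forall t, P t -> exists j, Sj j t < 1.

Lemma unifM (l : seq T) : exists M, (0 < M)%N /\ forall t, t \in l -> P t -> Sj M t < 1.
Proof.
elim: l => [|a l [M [M0 HM]]]; first by exists 1%N.
case: (classic (P a)) => [Pa|nPa].
  have [j Hj] := termP Pa.
  exists (maxn M j); split; first by rewrite (leq_trans M0) // leq_maxl.
  move=> t; rewrite inE => /orP [/eqP -> _|tl Pt].
    by apply: le_lt_trans (Sj_anti _ (leq_maxr M j)) Hj.
  by apply: le_lt_trans (Sj_anti _ (leq_maxl M j)) (HM t tl Pt).
exists M; split => // t; rewrite inE => /orP [/eqP -> Pt|]; last exact: HM.
by [].
Qed.

Lemma unifq M (l : seq T) : (forall t, t \in l -> P t -> Sj M t < 1) ->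
  exists q, 0 <= q /\ q < 1 /\ forall t, t \in l -> P t -> Sj M t <= q.
Proof.
elim: l => [|a l IH] H; first by exists 0; rewrite lexx ltr01.
have [|q [q0 [q1 Hq]]] := IH; first by move=> t tl; apply: H; rewrite inE tl orbT.
case: (classic (P a)) => [Pa|nPa].
  have Ha := H a (mem_head _ _) Pa.
  exists (Num.max q (Sj M a)); rewrite le_max q0 /= gt_max q1 Ha; split => //; split => //.
  move=> t; rewrite inE => /orP [/eqP -> _|tl Pt]; first by rewrite le_max lexx orbT.
  by rewrite le_max Hq.
exists q; split => //; split => // t; rewrite inE => /orP [/eqP -> Pt|]; last exact: Hq.
by [].
Qed.

Lemma geom_sum (f : nat -> rat) M q B :
  (0 < M)%N -> (forall k, 0 <= f k) -> (forall a b, (a <= b)%N -> f b <= f a) ->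
  (forall k, f (k + M)%N <= q * f k) -> 0 <= q ->
  M%:R * f 0%N <= B -> M%:R * f 0%N + q * B <= B ->
  forall N, \sum_(k < N) f k <= B.
Proof.
move=> M0 f0 fa fM q0 HB1 HB2 N.
elim/ltn_ind: N => N IH.
have [NM|MN] := leqP N M.
  apply: le_trans HB1.
  apply: le_trans (_ : \sum_(k < N) f 0%N <= _).
    by apply: ler_sum => k _; apply: fa.
  rewrite sumr_const card_ord -[f 0%N *+ N]mulr_natl; apply: ler_wpM2r => //; by rewrite ler_nat.
rewrite -(subnKC (ltnW MN)) big_split_ord /=.
apply: le_trans HB2; apply: lerD.
  apply: le_trans (_ : \sum_(k < M) f 0%N <= _).
    by apply: ler_sum => k _; apply: fa.
  by rewrite sumr_const card_ord -[f 0%N *+ M]mulr_natl.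
apply: le_trans (_ : \sum_(k < N - M) q * f k <= _).
  by apply: ler_sum => k _; rewrite addnC fM.
rewrite -mulr_sumr; apply: ler_wpM2l => //; apply: IH.
by rewrite ltn_subrL M0 /= (leq_ltn_trans _ MN).
Qed.

Lemma finite_exp : exists B, forall N, \sum_(k < N) tl k <= B.
Proof.
have [M [M0 HM]] := unifM (enum T).
have [q [q0 [q1 Hq]]] := unifq (l := enum T) (M := M) (fun t _ Pt => HM t (mem_enum _ t) Pt).
have tlM k : tl (k + M) <= q * tl k.
  rewrite tl_split /tl mulr_sumr; apply: ler_sum => t _.
  have [/eqP ->|nz] := boolP (dst k t == 0); first by rewrite !mul0r mulr0.
  rewrite mulrC; apply: ler_wpM2r; first exact: dst_ge0.
  by apply: Hq; [rewrite mem_enum | exact: (reachP nz)].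
set B := M%:R * tl 0%N / (1 - q).
have tl0 : 0 <= tl 0%N by apply: sumr_ge0 => t _; apply: dst_ge0.
have q1' : 0 < 1 - q by rewrite subr_gt0.
exists B; apply: (geom_sum M0 _ tl_anti tlM q0).
- by move=> k; apply: sumr_ge0 => t _; apply: dst_ge0.
- rewrite /B ler_pdivlMr // ler_piMr ?mulr_ge0 ?ler0n //.
  by rewrite lerBlDr lerDl.
- rewrite /B le_eqVlt; apply/orP; left; apply/eqP; field.
  by rewrite lt0r_neq0.
Qed.
End Prob.

Section Main.
Variables (d : bool) (V : finType) (G0 F : {set V * V}).
Local Notation kn := (known d G0 F).
Local Notation calG := (in_calG d G0 F).
Implicit Types (H : {set V * V}) (u v w c x : V).

Lemma calG_wf H : calG H -> wf_graph d H.
Proof. by case/and3P. Qed.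

Lemma calG_out H u : calG H -> outdeg H u = outdeg G0 u.
Proof. by case/and3P => _ /forallP /(_ u) /andP [/eqP -> _]. Qed.

Lemma calG_in H u : calG H -> indeg H u = indeg G0 u.
Proof. by case/and3P => _ /forallP /(_ u) /andP [_ /eqP ->]. Qed.

Lemma wf_loop H u : wf_graph d H -> (u, u) \notin H.
Proof. by case/andP => /forallP /(_ u). Qed.

Lemma wf_sym H u v : wf_graph d H -> ~~ d -> (u, v) \in H -> (v, u) \in H.
Proof.
case/andP => _ /orP [-> //|/forallP /(_ u) /forallP /(_ v) /implyP]; exact.
Qed.

Lemma kn_agree u v H1 H2 : kn u v -> calG H1 -> calG H2 -> ((u, v) \in H1) = ((u, v) \in H2).
Proof.
case/orP => /forallP h c1 c2.
  by rewrite (implyP (h H1) c1) (implyP (h H2) c2).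
by rewrite (negbTE (implyP (h H1) c1)) (negbTE (implyP (h H2) c2)).
Qed.

Lemma kn_loop u : kn u u.
Proof.
apply/orP; right; apply/forallP => H; apply/implyP => /calG_wf; exact: wf_loop.
Qed.

Lemma kn_sym u v : ~~ d -> kn u v -> kn v u.
Proof.
move=> nd /orP [] /forallP h; apply/orP; [left|right]; apply/forallP => H;
  apply/implyP => cH; have := implyP (h H) cH.
  by apply: wf_sym (calG_wf cH) nd.
by apply: contra => /(wf_sym (calG_wf cH) nd).
Qed.

Definition nxt (G' : {set V * V}) (w c x : V) := add_edge d (del_edge d G' w c) w x.

Lemma in_nxt G' w c x e : (e \in nxt G' w c x) =
  if d then (e == (w, x)) || ((e != (w, c)) && (e \in G'))
  else [|| e == (w, x), e == (x, w) | [&& e != (c, w), e != (w, c) & e \in G']].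
Proof. by rewrite /nxt /add_edge /del_edge; case: d; rewrite !inE. Qed.


Variable G : {set V * V}.

Definition Inv G' c w0 : Prop :=
 [/\ wf_graph d G',
   forall u, (indeg G' u + (u == w0) = indeg G0 u + (u == c))%N,
   forall u, (outdeg G' u + (~~ d && (u == w0)) = outdeg G0 u + (~~ d && (u == c)))%N &
   forall u v, kn u v -> ((u, v) \in G') = ((u, v) \in G)].

Lemma ar1 (D c x w g : nat) : (D + c + w = g + c)%N -> (D + x + w = g + x)%N.
Proof. lia. Qed.
Lemma ar2 (D c x w e g : nat) : (D + c + w + e = g + c)%N -> (D + x + w + e = g + x)%N.
Proof. lia. Qed.

Lemma kn_neq u v a b : kn u v -> ~~ kn a b -> ((u, v) == (a, b)) = false.
Proof. by move=> k nk; apply/eqP => [[eu ev]]; move: nk; rewrite -eu -ev k. Qed.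

Lemma inv_step G' c w0 w x : Inv G' c w0 -> (w, c) \in G' -> ~~ kn w c ->
  (w, x) \notin G' -> ~~ kn w x -> Inv (nxt G' w c x) x w0.
Proof.
case=> wf Hin Hout Hkn wc nkwc wx nkwx.
have wnc : w != c by apply: contraTneq wc => ->; exact: wf_loop wf.
have wnx : w != x by apply: contraNneq nkwx => <-; exact: kn_loop.
case Ed: d.
- have nD : (w, x) \notin G' :\ (w, c) by rewrite inE negb_and wx orbT.
  split.
  + apply/andP; split; last by rewrite Ed.
    apply/forallP => u; rewrite in_nxt Ed negb_or !xpair_eqE.
    apply/andP; split; first by apply: contra wnx => /andP [/eqP <- /eqP <-].
    by rewrite negb_and (wf_loop u wf) orbT.
  + move=> u; have := Hin u.
    rewrite /nxt /add_edge /del_edge Ed indegU1 // (indegD1 u wc) [c == u]eq_sym [x == u]eq_sym.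
    exact: ar1.
  + move=> u; have := Hout u.
    by rewrite /nxt /add_edge /del_edge Ed outdegU1 // (outdegD1 u wc) /=.
  + move=> u v k; rewrite in_nxt Ed (kn_neq k nkwx) (kn_neq k nkwc) /=; exact: Hkn.
- have nd : ~~ d by rewrite Ed.
  have cw : (c, w) \in G' by apply: wf_sym wf nd wc.
  have xw : (x, w) \notin G' by apply: contra wx => /(wf_sym wf nd).
  have nkcw : ~~ kn c w by apply: contra nkwc => /(kn_sym nd).
  have nkxw : ~~ kn x w by apply: contra nkwx => /(kn_sym nd).
  have cwD : (c, w) \in G' :\ (w, c).
    rewrite !inE cw andbT; apply: contra wnc => /eqP [-> _] //.
  have xwD : (x, w) \notin G' :\ (w, c) :\ (c, w) by rewrite !inE (negbTE xw) !andbF.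
  have wxD : (w, x) \notin (x, w) |: (G' :\ (w, c) :\ (c, w)).
    by rewrite !inE xpair_eqE (negbTE wx) (negbTE wnx) /= !andbF.
  split.
  + apply/andP; split; last first.
      rewrite Ed /=; apply/forallP => u; apply/forallP => v; apply/implyP.
      rewrite !in_nxt Ed !xpair_eqE.
      case/or3P => [/andP [/eqP -> /eqP ->]|/andP [/eqP -> /eqP ->]|]; rewrite ?eqxx ?orbT //.
      case/and3P => h1 h2 h3; rewrite (wf_sym wf nd h3).
      apply/orP; right; apply/orP; right; rewrite andbT.
      by apply/andP; split; rewrite andbC.
    apply/forallP => u; rewrite in_nxt Ed !xpair_eqE !negb_or.
    apply/and3P; split.
    * by apply: contra wnx => /andP [/eqP <- /eqP <-].
    * by apply: contra wnx => /andP [/eqP <- /eqP <-].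
    * by rewrite !negb_and (wf_loop u wf) !orbT.
  + move=> u; have := Hin u.
    rewrite /nxt /add_edge /del_edge Ed indegU1 // indegU1 // (indegD1 u wc) (indegD1 u cwD).
    rewrite [c == u]eq_sym [x == u]eq_sym [w == u]eq_sym.
    exact: ar1.
  + move=> u; have := Hout u.
    rewrite /nxt /add_edge /del_edge Ed outdegU1 // outdegU1 // (outdegD1 u wc) (outdegD1 u cwD) /=.
    rewrite [c == u]eq_sym [x == u]eq_sym [w == u]eq_sym.
    exact: ar2.
  + move=> u v k; rewrite in_nxt Ed (kn_neq k nkwx) (kn_neq k nkwc) (kn_neq k nkxw) (kn_neq k nkcw) /=.
    exact: Hkn.
Qed.

Lemma sum_ind (T : finType) (a : T) : \sum_t ((t == a)%:R : rat) = 1.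
Proof. by rewrite (bigD1 a) //= eqxx big1 ?addr0 // => t /negbTE ->. Qed.

Lemma sum_nz (I : finType) (P : pred I) (f : I -> rat) :
  \sum_(i | P i) f i != 0 -> exists i, P i && (f i != 0).
Proof.
move=> H; case: (pickP [pred i | P i && (f i != 0)]) => [i Hi|none]; first by exists i.
move: H; rewrite big1 ?eqxx // => i Pi; move: (none i) => /=; rewrite Pi /=.
by move/negbFE/eqP.
Qed.

Local Notation K := (Krun d G0 F).
Local Notation NGd := (NG d G0 F).
Local Notation MGd := (MG d G0 F).

Definition hB G' w w0 : rat :=
  if MGd G' w == set0 then 1 else \sum_(x in MGd G' w | x != w0) #|MGd G' w|%:R^-1.

Lemma K_rowE G' p c w0 : \sum_t K (G', p, c, w0) t =
  let A := [set w in NGd G' c | Some w != p] in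
  if A == set0 then 1 else \sum_(w in A) #|A|%:R^-1 * hB G' w w0.
Proof.
rewrite /Krun /=; case: ifP => _; first exact: sum_ind.
rewrite exchange_big; apply: eq_bigr => w _; rewrite -mulr_sumr; congr (_ * _).
rewrite /hB; case: ifP => _; first exact: sum_ind.
rewrite exchange_big; apply: eq_bigr => x _; by rewrite -mulr_sumr sum_ind mulr1.
Qed.

Lemma const_sum (B : {set V}) : B != set0 -> \sum_(x in B) #|B|%:R^-1 = 1 :> rat.
Proof.
move=> nB; rewrite sumr_const -[X in X = _]mulr_natr mulVf // pnatr_eq0 -lt0n card_gt0 //.
Qed.

Lemma hB_le G' w w0 : 0 <= hB G' w w0 <= 1.
Proof.
rewrite /hB; case: ifP => // /negbT nB.
apply/andP; split; first by apply: sumr_ge0 => x _; rewrite invr_ge0.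
rewrite -[X in _ <= X](const_sum nB) big_mkcondr /=; apply: ler_sum => x _.
by case: ifP => // _; rewrite invr_ge0.
Qed.

Lemma hB_lt G' w w0 : w0 \in MGd G' w -> hB G' w w0 < 1.
Proof.
move=> Bw; have nB : MGd G' w != set0 by apply/set0Pn; exists w0.
rewrite /hB (negbTE nB) -[X in _ < X](const_sum nB) big_mkcondr /= [X in _ < X](bigD1 w0) //=.
rewrite [X in X < _](bigD1 w0) //= eqxx add0r; apply: ltr_pwDl.
  by rewrite invr_gt0 ltr0n card_gt0.
by apply: ler_sum => x _; case: ifP => // _; rewrite invr_ge0.
Qed.

Lemma K_ge0 s t : 0 <= K s t.
Proof.
case: s => [[[G' p] c] w0] /=; case: ifP => _; first by rewrite ler0n.
apply: sumr_ge0 => w _; rewrite mulr_ge0 ?invr_ge0 //; case: ifP => _; first by rewrite ler0n.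
by apply: sumr_ge0 => x _; rewrite mulr_ge0 ?invr_ge0 ?ler0n.
Qed.

Lemma K_row s : \sum_t K s t <= 1.
Proof.
case: s => [[[G' p] c] w0]; rewrite K_rowE /=; case: ifP => // /negbT nA.
rewrite -[X in _ <= X](const_sum nA); apply: ler_sum => w _.
by rewrite ler_piMr ?invr_ge0 // (andP (hB_le _ _ _)).2.
Qed.

Lemma K_row_lt G' p c w0 w : w \in NGd G' c -> Some w != p -> w0 \in MGd G' w ->
  \sum_t K (G', p, c, w0) t < 1.
Proof.
move=> wN wp Bw; set A := [set w in NGd G' c | Some w != p].
have wA : w \in A by rewrite inE wN.
have nA : A != set0 by apply/set0Pn; exists w.
rewrite K_rowE /= -/A (negbTE nA) -[X in _ < X](const_sum nA) (bigD1 w) //= [X in _ < X](bigD1 w) //=.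
apply: ltr_leD.
  by rewrite -[X in _ < X]mulr1 ltr_pM2l ?invr_gt0 ?ltr0n ?card_gt0 // hB_lt.
apply: ler_sum => v _; by rewrite ler_piMr ?invr_ge0 // (andP (hB_le _ _ _)).2.
Qed.

Lemma sum_ge_term (I : finType) (P : pred I) (f : I -> rat) i :
  P i -> (forall j, P j -> 0 <= f j) -> f i <= \sum_(j | P j) f j.
Proof.
move=> Pi H; rewrite (bigD1 i) //= lerDl; apply: sumr_ge0 => j /andP [Pj _]; exact: H.
Qed.

Lemma K_pos G' p c w0 w x : w \in NGd G' c -> Some w != p -> x \in MGd G' w -> x != w0 ->
  0 < K (G', p, c, w0) (nxt G' w c x, Some w, x, w0).
Proof.
move=> wN wp xB xw0; rewrite /Krun; cbv beta iota zeta.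
have wA : w \in [set w in NGd G' c | Some w != p] by rewrite inE wN.
case: ifP => [/eqP A0|_]; first by move: wA; rewrite A0 inE.
rewrite (bigD1 w wA); apply: ltr_pwDl; last first.
  apply: sumr_ge0 => v _; rewrite mulr_ge0 ?invr_ge0 //; case: ifP => _; first by rewrite ler0n.
  by apply: sumr_ge0 => y _; rewrite mulr_ge0 ?invr_ge0 ?ler0n.
apply: mulr_gt0; first by rewrite invr_gt0 ltr0n card_gt0; apply/set0Pn; exists w.
case: ifP => [/eqP B0|_]; first by move: xB; rewrite B0 inE.
have xB' : (x \in MGd G' w) && (x != w0) by rewrite xB.
rewrite (bigD1 x xB'); apply: ltr_pwDl; last first.
  by apply: sumr_ge0 => y _; rewrite mulr_ge0 ?invr_ge0 ?ler0n.
apply: mulr_gt0; first by rewrite invr_gt0 ltr0n card_gt0; apply/set0Pn; exists x.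
by rewrite /nxt eqxx ltr01.
Qed.

Lemma K_supp G' p c w0 t : K (G', p, c, w0) t != 0 ->
  t = (G', p, c, w0) \/ exists w x, [/\ w \in NGd G' c, Some w != p, x \in MGd G' w,
     x != w0 & t = (nxt G' w c x, Some w, x, w0)].
Proof.
rewrite /Krun; cbv beta iota zeta.
case: ifP => _; first by rewrite pnatr_eq0 eqb0 negbK => /eqP; left.
case/sum_nz => w /andP [wA]; rewrite mulf_eq0 negb_or => /andP [_].
case: ifP => _; first by rewrite pnatr_eq0 eqb0 negbK => /eqP; left.
case/sum_nz => x /andP [/andP [xB xw0]]; rewrite mulf_eq0 negb_or => /andP [_].
rewrite pnatr_eq0 eqb0 negbK => /eqP ->; right; exists w, x.
by move: wA; rewrite inE => /andP [wN wp].
Qed.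

Lemma kn_diff G' c w0 H u v : calG G -> Inv G' c w0 -> calG H ->
  (u, v) \in G' -> (u, v) \notin H -> ~~ kn u v.
Proof.
move=> GG [_ _ _ Hkn] cH e ne; apply/negP => k; move: ne.
by rewrite -(kn_agree k GG cH) -(Hkn _ _ k) e.
Qed.

Lemma kn_diff2 G' c w0 H u v : calG G -> Inv G' c w0 -> calG H ->
  (u, v) \in H -> (u, v) \notin G' -> ~~ kn u v.
Proof.
move=> GG [_ _ _ Hkn] cH e ne; apply/negP => k; move: ne.
by rewrite (Hkn _ _ k) (kn_agree k GG cH) e.
Qed.

Lemma next_exists G' c w0 H w : Inv G' c w0 -> calG H -> (w, c) \in G' -> (w, c) \notin H ->
  exists x, (w, x) \in H /\ (w, x) \notin G'.
Proof.
move=> I cH wc nwc; have [wf _ Hout _] := I.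
have wnc : w != c by apply: contraTneq wc => ->; exact: wf_loop wf.
have le : (outdeg G' w <= outdeg G0 w)%N.
  by have := Hout w; rewrite (negbTE wnc) andbF addn0 => <-; exact: leq_addr.
case: (pickP [pred x | ((w, x) \in H) && ((w, x) \notin G')]) => [x /andP [h1 h2]|none].
  by exists x.
exfalso.
have sub : [set x | (w, x) \in H] \proper [set x | (w, x) \in G'].
  apply/properP; split.
    apply/subsetP => x; rewrite !inE => hx; move: (none x) => /=; rewrite hx /=.
    by move/negbFE.
  by exists c; rewrite !inE ?wc.
have := proper_card sub; rewrite -/(outdeg H w) -/(outdeg G' w) (calG_out _ cH).
by rewrite ltnNge le.
Qed.

Lemma exists_in G' c w0 H : Inv G' c w0 -> c != w0 -> calG H ->
  exists w, (w, c) \in G' /\ (w, c) \notin H.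
Proof.
move=> [_ Hin _ _] cw0 cH.
case: (pickP [pred w | ((w, c) \in G') && ((w, c) \notin H)]) => [w /andP [h1 h2]|none].
  by exists w.
exfalso.
have sub : [set v | (v, c) \in G'] \subset [set v | (v, c) \in H].
  apply/subsetP => v; rewrite !inE => hv; move: (none v) => /=; rewrite hv /=.
  by move/negbFE.
have := subset_leq_card sub; rewrite -/(indeg H c) -/(indeg G' c) (calG_in _ cH).
have := Hin c; rewrite (negbTE cw0) eqxx addn0 => ->.
by rewrite addn1 ltnn.
Qed.

Definition sd (A B : {set V * V}) : {set V * V} := (A :\: B) :|: (B :\: A).

Lemma in_sd A B e : (e \in sd A B) = (e \in A) (+) (e \in B).
Proof. by rewrite !inE; case: (e \in A); case: (e \in B). Qed.

Lemma sd_dec G' H w c x : wf_graph d G' -> wf_graph d H ->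
  (w, c) \in G' -> (w, c) \notin H -> (w, x) \in H -> (w, x) \notin G' ->
  (#|sd (nxt G' w c x) H| < #|sd G' H|)%N.
Proof.
move=> wfG wfH wc nwc wx nwx.
have wnc : w != c by apply: contraTneq wc => ->; exact: wf_loop wfG.
have wnx : w != x by apply: contraTneq wx => ->; exact: wf_loop wfH.
have cnx : c != x by apply: contraTneq wc => ->.
apply: proper_card; apply/properP; split; last first.
  exists (w, c); first by rewrite in_sd wc (negbTE nwc).
  rewrite in_sd in_nxt (negbTE nwc) addbF.
  case: d; rewrite !xpair_eqE !eqxx ?(negbTE wnc) ?(negbTE cnx) ?(negbTE wnx) /=; rewrite ?andbF //.
apply/subsetP => e; rewrite !in_sd in_nxt.
case Ed: d.
  case: (eqVneq e (w, x)) => [->|n1]; first by rewrite wx.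
  case: (eqVneq e (w, c)) => [->|n2] //=.
  by rewrite (negbTE nwc).
have nd : ~~ d by rewrite Ed.
case: (eqVneq e (w, x)) => [->|n1]; first by rewrite wx.
case: (eqVneq e (x, w)) => [->|n2]; first by rewrite (wf_sym wfH nd wx).
case: (eqVneq e (w, c)) => [->|n3]; first by rewrite andbF (negbTE nwc).
case: (eqVneq e (c, w)) => [->|n4] //=.
have ncw : (c, w) \notin H by apply: contra nwc => /(wf_sym wfH nd).
by rewrite (negbTE ncw).
Qed.

Lemma inv_start : calG G -> forall c, Inv G c c.
Proof.
move=> GG c; split.
- exact: calG_wf GG.
- by move=> u; rewrite (calG_in _ GG).
- by move=> u; rewrite (calG_out _ GG).
- by [].
Qed.

Lemma unknownH u v : ~~ kn u v -> exists H, [/\ calG H, (u, v) \in H & exists H', calG H' /\ (u, v) \notin H'].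
Proof.
rewrite /known negb_or => /andP [/forallPn [H' h1] /forallPn [H h2]].
move: h1 h2; rewrite !negb_imply ?negbK => /andP [c1 n1] /andP [c2 n2].
move: n2; rewrite andbT => n2; exists H; split => //; by exists H'.
Qed.

Hypothesis GG : calG G.

Lemma term H : calG H -> forall n G' p c w0, (#|sd G' H| < n)%N -> Inv G' c w0 -> c != w0 ->
  (forall p0, p = Some p0 -> (p0, c) \in H) -> exists j, Sj K j (G', p, c, w0) < 1.
Proof.
move=> cH; elim=> [|n IH] G' p c w0 //= hn I cw0 hp.
have [w [wc nwc]] := exists_in I cw0 cH.
have wN : w \in NGd G' c by rewrite inE wc (kn_diff GG I cH wc nwc).
have wp : Some w != p.
  case: p hp => [p0|] hp //; apply/eqP => -[ew]; move: nwc; rewrite ew.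
  by rewrite (hp p0 erefl).
have [x [wx nwx]] := next_exists I cH wc nwc.
have nkx := kn_diff2 GG I cH wx nwx.
have xB : x \in MGd G' w by rewrite inE nwx nkx.
case: (eqVneq x w0) => [xw0|xnw0].
  by exists 1%N; apply: Sj_base; apply: (K_row_lt wN wp); rewrite -xw0.
have [wf _ _ _] := I.
have I' := inv_step I wc (kn_diff GG I cH wc nwc) nwx nkx.
have hn' : (#|sd (nxt G' w c x) H| < n)%N.
  by rewrite -ltnS (leq_trans _ hn) // ltnS (sd_dec wf (calG_wf cH) wc nwc wx nwx).
have hp' : forall p0, Some w = Some p0 -> (p0, x) \in H by move=> p0 [<-].
have [j Hj] := IH _ _ _ _ hn' I' xnw0 hp'.
exists j.+1; apply: (Sj_step K_ge0 K_row (K_pos wN wp xB xnw0) Hj).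
Qed.

Lemma term_start c : NGd G c != set0 -> exists j, Sj K j (G, None, c, c) < 1.
Proof.
case/set0Pn => w; rewrite inE => /andP [wc nkwc].
have I := inv_start GG c.
have [H0 [_ _ [H [cH nwc]]]] := unknownH nkwc.
have [x [wx nwx]] := next_exists I cH wc nwc.
have nkx := kn_diff2 GG I cH wx nwx.
have xB : x \in MGd G w by rewrite inE nwx nkx.
have xnc : x != c by apply: contraNneq nwx => ->.
have wN : w \in NGd G c by rewrite inE wc nkwc.
have I' := inv_step I wc nkwc nwx nkx.
have hp' : forall p0, Some w = Some p0 -> (p0, x) \in H by move=> p0 [<-].
have [j Hj] := term cH (n := #|sd (nxt G w c x) H|.+1) (leqnn _) I' xnc hp'.
by exists j.+1; apply: (Sj_step K_ge0 K_row (K_pos (p := None) wN erefl xB xnc) Hj).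
Qed.

Definition Reach (s : state V) : Prop :=
  let: (G', p, c, w0) := s in Inv G' c w0 /\
  match p with
  | None => [/\ c = w0, G' = G & NGd G c != set0]
  | Some p0 => [/\ c != w0, (p0, c) \in G' & ~~ kn p0 c]
  end.

Lemma reach_term t : Reach t -> exists j, Sj K j t < 1.
Proof.
case: t => [[[G' p] c] w0] [I]; case: p => [p0|] [].
  move=> cw0 pc nk; have [H [cH pH _]] := unknownH nk.
  by apply: (term cH (n := #|sd G' H|.+1) (leqnn _) I cw0) => q [<-].
by move=> -> ->; exact: term_start.
Qed.

Lemma reach_step s t : Reach s -> K s t != 0 -> Reach t.
Proof.
case: s => [[[G' p] c] w0] Rs; case/K_supp => [->|[w [x [wN wp xB xw0 ->]]]] //.
have [I _] := Rs.
move: wN xB; rewrite !inE => /andP [wc nkwc] /andP [nwx nkx].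
split; first exact: inv_step I wc nkwc nwx nkx.
split => //; rewrite in_nxt; case: d; by rewrite eqxx.
Qed.

Lemma init_ge0 s : 0 <= init d G0 F G s.
Proof.
case: s => [[[G' p] c] w0]; rewrite /init; cbv beta iota zeta.
by case: ifP => _ //; rewrite invr_ge0 ler0n.
Qed.

Lemma reach_dst k t : dst K (init d G0 F G) k t != 0 -> Reach t.
Proof.
elim: k t => [|k IH] t.
  case: t => [[[G' p] c] w0]; rewrite /= /init; cbv beta iota zeta.
  case: ifP => [/and4P [/eqP -> /eqP -> /eqP -> cI] _|]; last by rewrite eqxx.
  split; first exact: inv_start.
  by split => //; move: cI; rewrite inE.
rewrite /=; case/sum_nz => s /andP [_]; rewrite mulf_eq0 negb_or => /andP [h1 h2].
exact: reach_step (IH s h1) h2.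
Qed.

Lemma dist_dst k t : dist d G0 F G k t = dst K (init d G0 F G) k t.
Proof.
elim: k t => [|k IH] t //=; apply: eq_bigr => s _; by rewrite IH.
Qed.

Lemma main_bound : exists B : rat, forall N : nat, \sum_(k < N) tail_prob d G0 F G k <= B.
Proof.
have [B HB] := finite_exp K_ge0 K_row init_ge0 reach_dst reach_term.
exists B => N; suff -> : \sum_(k < N) tail_prob d G0 F G k = \sum_(k < N) tl K (init d G0 F G) k.
  exact: HB.
apply: eq_bigr => k _.
by rewrite /tail_prob /tl; apply: eq_bigr => t _; rewrite dist_dst.
Qed.
End Main.


Unset Implicit Arguments.
Set Strict Implicit.
Set Printing Implicit Defensive.

(* E[T] = \sum_k P(T > k) (valid also when T = +oo with positive probability);
   finite expectation <=> the partial sums are bounded. *)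
Theorem proposition1 (d : bool) (V : finType) (G0 F G : {set V * V}) :
  wf_graph d G0 -> in_calG d G0 F G ->
  exists B : rat, forall N : nat,
    \sum_(k < N) tail_prob d G0 F G k <= B.
Proof.
move=> _ GG; exact: (main_bound GG).
Qed.
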